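(* Consider the algorithm PGiPN described in the context, applied with some $\epsilon\ge0$. Let $k$ be an iteration at which the algorithm did not stop and at which the switch condition $\mathrm{supp}(x^k)=\mathrm{supp}(\bar x^k)$, $\mathrm{supp}(Bx^k)=\mathrm{supp}(B\bar x^k)$ holds. Define $R_k(y)=\bar\mu_k[y-\mathrm{proj}_{\Pi_k}(y-\bar\mu_k^{-1}(G_k(y-x^k)+\nabla f(x^k)))]$ and $r_k(x)=\bar\mu_k[x-\mathrm{proj}_{\Pi_k}(x-\bar\mu_k^{-1}\nabla f(x))]$. Then: (i) for every $y$ sufficiently close to the (unique) minimizer of $\Theta_k$, the point $y-\bar\mu_k^{-1}R_k(y)$ satisfies both inexactness conditions $\Theta_k(y)\le\Theta_k(x^k)$ and $\mathrm{dist}(0,\partial\Theta_k(y))\le\frac{\min\{\bar\mu_k^{-1},1\}}{2}\min\{\|\bar\mu_k(x^k-\bar x^k)\|,\|\bar\mu_k(x^k-\bar x^k)\|^{1+\varsigma}\}$; (ii) for $y^k$ satisfying these conditions, the line search in the Newton step terminates after finitely many trials and $\alpha_k\ge\min\{1,\frac{(1-\varrho)b_1\beta}{L_1}\|\bar\mu_k(x^k-\bar x^k)\|^\sigma\}$; (iii) the second inexactness condition on $y^k$ implies $\|R_k(y^k)\|\le\frac12\min\{\|r_k(x^k)\|,\|r_k(x^k)\|^{1+\varsigma}\}$.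
   Context: Setting: $B\in\mathbb{R}^{p\times n}$, $\lambda_1,\lambda_2>0$, $l\le0\le u$ in $\mathbb{R}^n$, $f:\mathbb{R}^n\to\mathbb{R}$ twice continuously differentiable, $\Omega=\{x:l\le x\le u\}$, $g(x)=\lambda_1\|Bx\|_0+\lambda_2\|x\|_0+\delta_\Omega(x)$ ($\|\cdot\|_0$ = number of nonzeros, $\delta_\Omega$ indicator), $F=f+g$; $\mathrm{supp}(x)=\{i:x_i\ne0\}$; $\mathrm{prox}_{\mu g}(z)=\arg\min_x\{\frac1{2\mu}\|x-z\|^2+g(x)\}$; $L_1>0$ is a Lipschitz constant of $\nabla f$ on $\Omega$; $\Pi(z)=\{x\in\Omega:\mathrm{supp}(x)\subset\mathrm{supp}(z),\mathrm{supp}(Bx)\subset\mathrm{supp}(Bz)\}$; $\mathrm{proj}_C$ is Euclidean projection; $\partial$ denotes subdifferential. Algorithm PGiPN: parameters $\epsilon\ge0$, $\mu_{\max}>\mu_{\min}>0$, $\tau>1$, $\alpha>0$, $b_1>0$, $b_2\ge1$, $\varrho\in(0,\frac12)$, $\sigma\in(0,\frac12)$, $\varsigma\in(\sigma,1]$, $\beta\in(0,1)$, $x^0\in\Omega$. Iteration $k$: (PG step) pick $\mu_k\in[\mu_{\min},\mu_{\max}]$; let $m_k$ be the smallest nonnegative integer $m$ such that some $\bar x^k\in\mathrm{prox}_{(\mu_k\tau^m)^{-1}g}(x^k-(\mu_k\tau^m)^{-1}\nabla f(x^k))$ satisfies $F(\bar x^k)\le F(x^k)-\frac\alpha2\|x^k-\bar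 x^k\|^2$; set $\bar\mu_k=\mu_k\tau^{m_k}$. If $\bar\mu_k\|x^k-\bar x^k\|\le\epsilon$, stop. If the switch condition holds go to the Newton step, else set $x^{k+1}=\bar x^k$. (Newton step) let $\Pi_k=\Pi(x^k)$, $\Theta_k(x)=f(x^k)+\langle\nabla f(x^k),x-x^k\rangle+\frac12\langle x-x^k,G_k(x-x^k)\rangle+\delta_{\Pi_k}(x)$; find $y^k$ satisfying the two inexactness conditions stated in (i); set $d^k=y^k-x^k$; let $t_k$ be the smallest nonnegative integer $t$ with $f(x^k+\beta^td^k)\le f(x^k)+\varrho\beta^t\langle\nabla f(x^k),d^k\rangle$; $\alpha_k=\beta^{t_k}$, $x^{k+1}=x^k+\alpha_kd^k$. Choice of $G_k$ (with $e_k=b_1\|\bar\mu_k(x^k-\bar x^k)\|^\sigma$): either $G_k=\nabla^2f(x^k)+(b_2[-\lambda_{\min}(\nabla^2f(x^k))]_++e_k)I$; or, when $f(x)=h(Ax-b)$ with $A\in\mathbb{R}^{m\times n}$, $b\in\mathbb{R}^m$, $h$ twice continuously differentiable and separable, $G_k=\nabla^2f(x^k)+b_2[-\lambda_{\min}(\nabla^2h(Ax^k-b))]_+A^\top A+e_kI$ or $G_k=A^\top[\nabla^2h(Ax^k-b)]_+A+e_kI$, where $t_+=\max\{t,0\}$ and $[D]_+$ replaces the negative diagonal entries of the diagonal matrix $D$ by $0$. In all cases $G_k\succeq e_kI$. *)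

(* Defs.v *)
From HB Require Import structures.
From mathcomp Require Import all_boot all_order all_algebra.
From mathcomp Require Import all_classical all_reals all_analysis.
Set Implicit Arguments. Unset Strict Implicit. Unset Printing Implicit Defensive.
Import Order.TTheory GRing.Theory Num.Theory.
Import numFieldNormedType.Exports.
Local Open Scope classical_set_scope.
Local Open Scope ring_scope.

Section Defs.
Variable R : realType.

Definition dotv {n} (u v : 'cV[R]_n) : R := \sum_(i < n) u i 0 * v i 0.
Definition enorm {n} (v : 'cV[R]_n) : R := Num.sqrt (dotv v v).

Definition supp {n} (v : 'cV[R]_n) : {set 'I_n} := [set i | v i 0 != 0].
Definition nnz {n} (v : 'cV[R]_n) : nat := #|supp v|.

Definition box {n} (l u : 'cV[R]_n) : set 'cV[R]_n :=
  [set x | forall i, l i 0 <= x i 0 <= u i 0].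

Definition Pi_set {p n} (B : 'M[R]_(p, n)) (l u z : 'cV[R]_n) : set 'cV[R]_n :=
  [set x | box l u x /\ supp x \subset supp z /\ supp (B *m x) \subset supp (B *m z)].

Definition gfun {p n} (lam1 lam2 : R) (B : 'M[R]_(p, n)) (l u : 'cV[R]_n)
  (x : 'cV[R]_n) : \bar R :=
  if `[< box l u x >] then (lam1 * (nnz (B *m x))%:R + lam2 * (nnz x)%:R)%:E
  else +oo%E.

Definition Ffun {p n} (f : 'cV[R]_n -> R) (lam1 lam2 : R) (B : 'M[R]_(p, n))
  (l u : 'cV[R]_n) (x : 'cV[R]_n) : \bar R :=
  ((f x)%:E + gfun lam1 lam2 B l u x)%E.

Definition prox_set {n} (mu : R) (g : 'cV[R]_n -> \bar R) (z : 'cV[R]_n) :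
  set 'cV[R]_n :=
  [set x | forall y, (((2 * mu)^-1 * enorm (x - z) ^+ 2)%:E + g x
                      <= ((2 * mu)^-1 * enorm (y - z) ^+ 2)%:E + g y)%E].

Definition proj {n} (C : set 'cV[R]_n) (z : 'cV[R]_n) : 'cV[R]_n :=
  xget 0 [set q | C q /\ forall q', C q' -> enorm (z - q) <= enorm (z - q')].

Definition Theta {n} (f : 'cV[R]_n -> R) (gf : 'cV[R]_n -> 'cV[R]_n)
  (G : 'M[R]_n) (x : 'cV[R]_n) (Pi : set 'cV[R]_n) (y : 'cV[R]_n) : \bar R :=
  if `[< Pi y >] then
    (f x + dotv (gf x) (y - x) + 2^-1 * dotv (y - x) (G *m (y - x)))%:E
  else +oo%E.

Definition subdiff {n} (F : 'cV[R]_n -> \bar R) (y : 'cV[R]_n) : set 'cV[R]_n :=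
  [set v | F y \is a fin_num /\ forall z, (F y + (dotv v (z - y))%:E <= F z)%E].

(* dist(0, S) (= +oo if S is empty) *)
Definition dist0 {n} (S : set 'cV[R]_n) : \bar R :=
  ereal_inf [set (enorm v)%:E | v in S].

Definition psd {n} (M : 'M[R]_n) : Prop :=
  M^T = M /\ forall v : 'cV[R]_n, 0 <= dotv v (M *m v).

Definition C2_with {n} (f : 'cV[R]_n -> R) (gf : 'cV[R]_n -> 'cV[R]_n)
  (H : 'cV[R]_n -> 'M[R]_n) : Prop :=
  (forall x, differentiable f x /\ forall v, derive f x v = dotv (gf x) v) /\
  (forall x, differentiable gf x /\ forall v, derive gf x v = H x *m v) /\
  continuous H.

Definition lambda_min_is {n} (M : 'M[R]_n) (lam : R) : Prop :=
  eigenvalue M lam /\ forall a, eigenvalue M a -> lam <= a.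

Definition pos_part (t : R) : R := Num.max t 0.

Definition pos_diag {m} (D : 'M[R]_m) : 'M[R]_m :=
  \matrix_(i, j) (if i == j then Num.max (D i j) 0 else D i j).

Definition G_choice {n} (f : 'cV[R]_n -> R) (gf : 'cV[R]_n -> 'cV[R]_n)
  (H : 'cV[R]_n -> 'M[R]_n) (b2 : R) (x : 'cV[R]_n) (e : R) (G : 'M[R]_n) : Prop :=
  (exists lam, lambda_min_is (H x) lam /\ G = H x + (b2 * pos_part (- lam) + e)%:M)
  \/ exists (m : nat) (A : 'M[R]_(m, n)) (b : 'cV[R]_m) (h : 'cV[R]_m -> R)
            (gh : 'cV[R]_m -> 'cV[R]_m) (Hh : 'cV[R]_m -> 'M[R]_m),
      C2_with h gh Hh /\
      (exists hs : 'I_m -> R -> R, forall z, h z = \sum_(i < m) hs i (z i 0)) /\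
      (forall z, f z = h (A *m z - b)) /\
      ((exists lam, lambda_min_is (Hh (A *m x - b)) lam /\
          G = H x + (b2 * pos_part (- lam)) *: (A^T *m A) + e%:M)
       \/ G = A^T *m pos_diag (Hh (A *m x - b)) *m A + e%:M).

Definition pg_ok {p n} (f : 'cV[R]_n -> R) (gf : 'cV[R]_n -> 'cV[R]_n)
  (lam1 lam2 : R) (B : 'M[R]_(p, n)) (l u : 'cV[R]_n) (alpha mu tau : R)
  (x : 'cV[R]_n) (m : nat) (z : 'cV[R]_n) : Prop :=
  prox_set ((mu * tau ^+ m)^-1) (gfun lam1 lam2 B l u)
           (x - (mu * tau ^+ m)^-1 *: gf x) z /\
  (Ffun f lam1 lam2 B l u z <= Ffun f lam1 lam2 B l u x
                               - (alpha / 2 * enorm (x - z) ^+ 2)%:E)%E.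

Definition Rk {n} (gf : 'cV[R]_n -> 'cV[R]_n) (G : 'M[R]_n) (Pi : set 'cV[R]_n)
  (mubar : R) (xk y : 'cV[R]_n) : 'cV[R]_n :=
  mubar *: (y - proj Pi (y - mubar^-1 *: (G *m (y - xk) + gf xk))).

Definition rk {n} (gf : 'cV[R]_n -> 'cV[R]_n) (Pi : set 'cV[R]_n) (mubar : R)
  (x : 'cV[R]_n) : 'cV[R]_n :=
  mubar *: (x - proj Pi (x - mubar^-1 *: gf x)).

Definition inexact_cond1 {n} f gf (G : 'M[R]_n) xk Pi (y : 'cV[R]_n) : Prop :=
  (Theta f gf G xk Pi y <= Theta f gf G xk Pi xk)%E.

Definition inexact_cond2 {n} f gf (G : 'M[R]_n) xk Pi (mubar varsigma : R)
  (xbar y : 'cV[R]_n) : Prop :=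
  (dist0 (subdiff (Theta f gf G xk Pi) y)
   <= (Num.min mubar^-1 1 / 2 *
       Num.min (enorm (mubar *: (xk - xbar)))
               (enorm (mubar *: (xk - xbar)) `^ (1 + varsigma)))%:E)%E.

Definition armijo {n} (f : 'cV[R]_n -> R) (gf : 'cV[R]_n -> 'cV[R]_n)
  (rho beta : R) (xk d : 'cV[R]_n) (t : nat) : Prop :=
  f (xk + beta ^+ t *: d) <= f xk + rho * beta ^+ t * dotv (gf xk) d.

End Defs.

(* Main.v *)
Require Import Defs.
From HB Require Import structures.
From mathcomp Require Import all_boot all_order all_algebra.
From mathcomp Require Import all_classical all_reals all_analysis.
Import Order.TTheory GRing.Theory Num.Theory.
Import numFieldNormedType.Exports.
Local Open Scope classical_set_scope.
Local Open Scope ring_scope.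

Lemma prox_box {R : realType} {p n} lam1 lam2 (B : 'M[R]_(p, n)) l u mu z x y :
  prox_set mu (gfun lam1 lam2 B l u) z x -> box l u y -> box l u x.
Proof.
move=> /(_ y) h by_; apply: contrapT => nb; move: h.
rewrite /gfun (asboolF nb) (asboolT by_) => h.
suff : (+oo <= ((2 * mu)^-1 * enorm (y - z) ^+ 2 +
   (lam1 * (nnz (B *m y))%:R + lam2 * (nnz y)%:R))%:E)%E by rewrite leye_eq.
exact: h.
Qed.

From mathcomp Require Import ring lra.

Section Basic.
Context {R : realType}.
Implicit Types a b : R.

Lemma dotvE {n} (u v : 'cV[R]_n) : dotv u v = (u^T *m v) 0 0.
Proof. by rewrite /dotv mxE; apply: eq_bigr => i _; rewrite mxE. Qed.

Lemma dotvC {n} (u v : 'cV[R]_n) : dotv u v = dotv v u.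
Proof. by apply: eq_bigr => i _; rewrite mulrC. Qed.

Lemma dotvDl {n} (u w v : 'cV[R]_n) : dotv (u + w) v = dotv u v + dotv w v.
Proof. by rewrite /dotv -big_split; apply: eq_bigr => i _; rewrite mxE mulrDl. Qed.

Lemma dotvDr {n} (u w v : 'cV[R]_n) : dotv v (u + w) = dotv v u + dotv v w.
Proof. by rewrite dotvC dotvDl !(dotvC v). Qed.

Lemma dotvZl {n} a (u v : 'cV[R]_n) : dotv (a *: u) v = a * dotv u v.
Proof. by rewrite /dotv mulr_sumr; apply: eq_bigr => i _; rewrite mxE mulrA. Qed.

Lemma dotvZr {n} a (u v : 'cV[R]_n) : dotv v (a *: u) = a * dotv v u.
Proof. by rewrite dotvC dotvZl dotvC. Qed.

Lemma dotvNl {n} (u v : 'cV[R]_n) : dotv (- u) v = - dotv u v.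
Proof. by rewrite -scaleN1r dotvZl mulN1r. Qed.

Lemma dotvNr {n} (u v : 'cV[R]_n) : dotv v (- u) = - dotv v u.
Proof. by rewrite dotvC dotvNl dotvC. Qed.

Lemma dotvBl {n} (u w v : 'cV[R]_n) : dotv (u - w) v = dotv u v - dotv w v.
Proof. by rewrite dotvDl dotvNl. Qed.

Lemma dotvBr {n} (u w v : 'cV[R]_n) : dotv v (u - w) = dotv v u - dotv v w.
Proof. by rewrite dotvDr dotvNr. Qed.

Lemma dotv0l {n} (v : 'cV[R]_n) : dotv 0 v = 0.
Proof. by rewrite /dotv big1 // => i _; rewrite mxE mul0r. Qed.

Lemma dotv0r {n} (v : 'cV[R]_n) : dotv v 0 = 0.
Proof. by rewrite dotvC dotv0l. Qed.

Lemma dotv_ge0 {n} (v : 'cV[R]_n) : 0 <= dotv v v.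
Proof. by apply: sumr_ge0 => i _; rewrite -expr2 sqr_ge0. Qed.

Lemma dotv_eq0 {n} (v : 'cV[R]_n) : dotv v v = 0 -> v = 0.
Proof.
move=> /psumr_eq0P H; apply/matrixP => i j; rewrite (ord1 j) mxE.
have /eqP := H (fun i _ => ltac:(by rewrite -expr2 sqr_ge0)) i isT.
by rewrite -expr2 sqrf_eq0 => /eqP.
Qed.

Lemma dotv_mx {n} m (M : 'M[R]_(m, n)) (u : 'cV[R]_m) (v : 'cV[R]_n) :
  dotv u (M *m v) = dotv (M^T *m u) v.
Proof. by rewrite !dotvE trmx_mul trmxK mulmxA. Qed.

Lemma enorm_ge0 {n} (v : 'cV[R]_n) : 0 <= enorm v.
Proof. exact: sqrtr_ge0. Qed.

Lemma enorm_sq {n} (v : 'cV[R]_n) : enorm v ^+ 2 = dotv v v.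
Proof. by rewrite sqr_sqrtr // dotv_ge0. Qed.

Lemma enorm0 {n} : enorm (0 : 'cV[R]_n) = 0.
Proof. by rewrite /enorm dotv0l sqrtr0. Qed.

Lemma enorm_eq0 {n} (v : 'cV[R]_n) : enorm v = 0 -> v = 0.
Proof. by move=> H; apply: dotv_eq0; rewrite -enorm_sq H expr0n. Qed.

Lemma enormZ {n} a (v : 'cV[R]_n) : enorm (a *: v) = `|a| * enorm v.
Proof.
by rewrite /enorm dotvZl dotvZr mulrA -expr2 sqrtrM ?sqr_ge0 // sqrtr_sqr.
Qed.

Lemma enormN {n} (v : 'cV[R]_n) : enorm (- v) = enorm v.
Proof. by rewrite -scaleN1r enormZ normrN normr1 mul1r. Qed.

Lemma enormB {n} (u v : 'cV[R]_n) : enorm (u - v) = enorm (v - u).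
Proof. by rewrite -enormN opprB. Qed.

Lemma sq_le_le a b : 0 <= b -> a ^+ 2 <= b ^+ 2 -> a <= b.
Proof. move=> b0 h; nra. Qed.

Lemma CS {n} (u v : 'cV[R]_n) : dotv u v <= enorm u * enorm v.
Proof.
have [->|u0] := eqVneq u 0; first by rewrite dotv0l enorm0 mul0r.
have [->|v0] := eqVneq v 0; first by rewrite dotv0r enorm0 mulr0.
set a := enorm u; set b := enorm v.
have a0 : 0 < a by rewrite lt0r enorm_ge0 andbT; apply/eqP => /enorm_eq0; apply/eqP.
have b0 : 0 < b by rewrite lt0r enorm_ge0 andbT; apply/eqP => /enorm_eq0; apply/eqP.
have := dotv_ge0 (b *: u - a *: v).
rewrite !(dotvBl, dotvBr, dotvZl, dotvZr) (dotvC v u) -!enorm_sq -/a -/b => h.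
have ab : 0 < a * b by rewrite mulr_gt0.
rewrite leNgt; apply/negP => hd.
have : 0 < a * b * (dotv u v - a * b) by rewrite mulr_gt0 // subr_gt0.
nra.
Qed.

Lemma CSabs {n} (u v : 'cV[R]_n) : `|dotv u v| <= enorm u * enorm v.
Proof.
rewrite ler_norml CS andbT -lerNl -dotvNl.
by apply: le_trans (CS _ _) _; rewrite enormN.
Qed.

Lemma enorm_sqD {n} (u v : 'cV[R]_n) :
  enorm (u + v) ^+ 2 = enorm u ^+ 2 + 2 * dotv u v + enorm v ^+ 2.
Proof. rewrite !enorm_sq !(dotvDl, dotvDr) (dotvC v u); ring. Qed.

Lemma enormD {n} (u v : 'cV[R]_n) : enorm (u + v) <= enorm u + enorm v.
Proof.
apply: sq_le_le; first by rewrite addr_ge0 ?enorm_ge0.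
rewrite enorm_sqD; have := CS u v; nra.
Qed.

Lemma enorm_coord {n} (v : 'cV[R]_n) i : `|v i 0| <= enorm v.
Proof.
apply: sq_le_le; first exact: enorm_ge0.
rewrite enorm_sq /dotv (bigD1 i) //= real_normK ?num_real // -expr2 lerDl.
by apply: sumr_ge0 => j _; rewrite -expr2 sqr_ge0.
Qed.

Lemma enorm_le_sum {n} (v : 'cV[R]_n) : enorm v <= \sum_i `|v i 0|.
Proof.
apply: sq_le_le; first by apply: sumr_ge0.
rewrite enorm_sq /dotv.
pose P (y1 y2 : R) := y1 <= y2 ^+ 2 /\ 0 <= y2.
suff [] : P (\sum_i v i 0 * v i 0) (\sum_i `|v i 0|) by [].
apply: (big_rec2 P); first by rewrite /P expr0n.
move=> i x y _ [hx hy]; split; last by rewrite addr_ge0.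
rewrite -expr2 -(real_normK (num_real (v i 0))).
have := normr_ge0 (v i 0); nra.
Qed.
End Basic.

Section Proj.
Context {R : realType}.

Lemma op_bound {m n} (M : 'M[R]_(m, n)) :
  exists K, 0 <= K /\ forall v, enorm (M *m v) <= K * enorm v.
Proof.
exists (\sum_i \sum_j `|M i j|); split.
  by apply: sumr_ge0 => i _; apply: sumr_ge0.
move=> v; apply: le_trans (enorm_le_sum _) _.
rewrite mulr_suml; apply: ler_sum => i _; rewrite mulr_suml mxE.
apply: le_trans (ler_norm_sum _ _ _) _; apply: ler_sum => j _.
by rewrite normrM ler_wpM2l // enorm_coord.
Qed.

Definition cvx {n} (C : set 'cV[R]_n) :=
  forall x y t, C x -> C y -> 0 <= t <= 1 -> C (x + t *: (y - x)).

Definition nearest {n} (C : set 'cV[R]_n) w q :=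
  C q /\ forall q', C q' -> enorm (w - q) <= enorm (w - q').

Lemma sq_mono {a b : R} : 0 <= a -> a <= b -> a ^+ 2 <= b ^+ 2.
Proof. move=> a0 ab; nra. Qed.

Lemma nearest_VI {n} (C : set 'cV[R]_n) w q : cvx C -> nearest C w q ->
  forall c, C c -> dotv (w - q) (c - q) <= 0.
Proof.
move=> cC [Cq Hq] c Cc.
set s := dotv (w - q) (c - q); set N := dotv (c - q) (c - q).
rewrite leNgt; apply/negP => s0.
have N0 : 0 <= N by apply: dotv_ge0.
have sN : 0 < s + N by rewrite ltr_wpDr.
pose t := s / (s + N).
have t0 : 0 < t by rewrite divr_gt0.
have t1 : t <= 1 by rewrite ler_pdivrMr // mul1r lerDl.
have ht : t * (s + N) = s by rewrite divfK // gt_eqF.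
have := Hq _ (cC _ _ t Cq Cc (introT andP (conj (ltW t0) t1))).
move=> /(sq_mono (enorm_ge0 _)).
have -> : w - (q + t *: (c - q)) = (w - q) + (- t) *: (c - q).
  by rewrite scaleNr opprD addrA.
rewrite (enorm_sqD (w - q)) enormZ exprMn normrN real_normK ?num_real //.
rewrite dotvZr !enorm_sq -/s -/N => h.
nra.
Qed.

Lemma VI_proj {n} (C : set 'cV[R]_n) w q : C q ->
  (forall c, C c -> dotv (w - q) (c - q) <= 0) -> Defs.proj C w = q.
Proof.
move=> Cq Hq.
have key c : C c -> enorm (w - q) ^+ 2 + enorm (q - c) ^+ 2 <= enorm (w - c) ^+ 2.
  move=> Cc; have -> : w - c = (w - q) + (q - c) by rewrite addrA subrK.
  have e : dotv (w - q) (q - c) = - dotv (w - q) (c - q) by rewrite -dotvNr opprB.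
  rewrite (enorm_sqD (w - q) (q - c)) e; have := Hq c Cc.
  have := enorm_ge0 (w - q); nra.
have nq : nearest C w q.
  split=> // c Cc; apply: sq_le_le; first exact: enorm_ge0.
  have := key c Cc; have := enorm_ge0 (q - c); nra.
have [Cp Hp] : nearest C w (Defs.proj C w) by apply: (xgetI 0 nq).
have := key _ Cp; have := Hp _ Cq.
move=> /(sq_mono (enorm_ge0 _)) h1 h2.
have h3 : enorm (q - Defs.proj C w) ^+ 2 <= 0 by lra.
have : enorm (q - Defs.proj C w) = 0.
  by apply/eqP; rewrite eq_le enorm_ge0 andbT; apply: sq_le_le; rewrite ?expr0n.
by move=> /enorm_eq0 /eqP; rewrite subr_eq0 => /eqP ->.
Qed.

Lemma proj_spec {n} (C : set 'cV[R]_n) w : cvx C -> (exists q, nearest C w q) ->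
  C (Defs.proj C w) /\ forall c, C c -> dotv (w - Defs.proj C w) (c - Defs.proj C w) <= 0.
Proof.
move=> cC [q nq].
have np : nearest C w (Defs.proj C w) by apply: (xgetI 0 nq).
by split; [case: np | apply: nearest_VI].
Qed.

Lemma VI_nonexp {n} (C : set 'cV[R]_n) w1 w2 p1 p2 : C p1 -> C p2 ->
  (forall c, C c -> dotv (w1 - p1) (c - p1) <= 0) ->
  (forall c, C c -> dotv (w2 - p2) (c - p2) <= 0) ->
  enorm (p1 - p2) <= enorm (w1 - w2).
Proof.
move=> C1 C2 H1 H2.
have h1 := H1 _ C2; have h2 := H2 _ C1.
have e : dotv (p1 - p2) (p1 - p2) <= dotv (w1 - w2) (p1 - p2).
  move: h1 h2; rewrite -(opprB p1 p2) dotvNr.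
  rewrite !(dotvBl, dotvBr, dotvNr, dotvNl) !(dotvC p2 p1) !(dotvC w2 p1)
    !(dotvC w1 p2) !(dotvC w2 p2) !(dotvC w1 p1); lra.
have := CS (w1 - w2) (p1 - p2); rewrite -enorm_sq in e.
have := enorm_ge0 (p1 - p2); have := enorm_ge0 (w1 - w2); nra.
Qed.
End Proj.

Section Exist.
Import Num.Def.
Context {R : realType}.

Lemma rV_coord_le {n} (r : 'rV[R]_n) i : `|r 0 i| <= `|r|.
Proof.
have /mapP[j Hj ->] : `|r 0 i| \in [seq `|r x.1 x.2| | x : 'I_1 * 'I_n].
  by apply/mapP; exists (0, i) => //=; rewrite mem_enum.
by rewrite [leRHS]/normr /= mx_normrE; apply/bigmax_geP; right => /=; exists j.
Qed.

Lemma enorm_tr_le {n} (r : 'rV[R]_n) : enorm (r^T) <= n%:R * `|r|.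
Proof.
apply: le_trans (enorm_le_sum _) _.
apply: le_trans (_ : _ <= \sum_(i < n) `|r|) _.
  by apply: ler_sum => i _; rewrite mxE rV_coord_le.
by rewrite sumr_const card_ord mulr_natl.
Qed.

Lemma exists_min {n} (C : set 'cV[R]_n) (phi : 'cV[R]_n -> R) x0 :
  C x0 ->
  (forall x, (forall e, 0 < e -> exists s, C s /\ enorm (x - s) < e) -> C x) ->
  (exists M, forall x, C x -> forall i, `|x i 0| <= M) ->
  (forall x e, 0 < e -> exists2 d, 0 < d &
      forall y, enorm (x - y) < d -> `|phi x - phi y| < e) ->
  exists2 c, C c & forall t, C t -> phi c <= phi t.
Proof.
move=> Cx0 Ccl [M HM] Hphi.
pose A := [set r : 'rV[R]_n | C r^T].
pose psi := fun r : 'rV[R]_n => phi r^T.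
have np1 : 0 < n%:R + 1 :> R by rewrite ltr_wpDl.
have A0 : A !=set0 by exists x0^T; rewrite /A /= trmxK.
have cA : compact A.
  apply: bounded_closed_compact.
    rewrite /bounded_set /= /bounded_near.
    near=> K => r Ar /=.
    rewrite [`|r|]/normr /= mx_normrE; apply: bigmax_le => [|[i j] _] /=.
      near: K; apply: nbhs_pinfty_ge; exact: num_real.
    apply: le_trans (_ : M <= K).
      by rewrite (ord1 i); have := HM _ Ar j; rewrite mxE.
    near: K; apply: nbhs_pinfty_ge; exact: num_real.
  rewrite closedE => r Hr; apply: Ccl => e e0.
  apply: contrapT => He; apply: Hr.
  apply/nbhs_ballP; exists (e / (n%:R + 1)) => /=; first by rewrite divr_gt0.
  move=> s; rewrite -ball_normE /= => hs As; apply: He; exists s^T; split => //.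
  rewrite -linearB /=; apply: le_lt_trans (enorm_tr_le _) _.
  apply: le_lt_trans (_ : n%:R * `|r - s| <= (n%:R + 1) * `|r - s|) _.
    by rewrite ler_wpM2r // lerDl.
  by rewrite mulrC -ltr_pdivlMr.
have cpsi : {within A, continuous psi}.
  apply: continuous_subspaceT => r; apply/(@cvgrPdist_lt _ _ _ _ (nbhs_filter r)) => e e0.
  have [d d0 Hd] := Hphi r^T e e0.
  apply/nbhs_ballP; exists (d / (n%:R + 1)) => /=; first by rewrite divr_gt0.
  move=> s; rewrite -ball_normE /= => hs; apply: Hd.
  rewrite -linearB /=; apply: le_lt_trans (enorm_tr_le _) _.
  apply: le_lt_trans (_ : n%:R * `|r - s| <= (n%:R + 1) * `|r - s|) _.
    by rewrite ler_wpM2r // lerDl.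
  by rewrite mulrC -ltr_pdivlMr.
have [c cA' Hc] := EVT_min_rV A0 cA cpsi.
exists c^T; first by move: cA'; rewrite inE.
move=> t Ct; have := Hc t^T; rewrite /psi trmxK; apply.
by rewrite inE /A /= trmxK.
Unshelve. all: by end_near.
Qed.
End Exist.

Section Quad.
Context {R : realType}.

Lemma small_t (s K : R) : (forall t, 0 < t <= 1 -> 0 <= s + t * K) -> 0 <= s.
Proof.
move=> H; rewrite leNgt; apply/negP => s0.
have sK : 0 < - s + `|K| by rewrite ltr_wpDr // oppr_gt0.
pose t := - s / (- s + `|K|).
have t0 : 0 < t by rewrite divr_gt0 // oppr_gt0.
have t1 : t <= 1 by rewrite ler_pdivrMr // mul1r lerDl.
have ht : t * (- s + `|K|) = - s by rewrite divfK // gt_eqF.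
have := H t; rewrite t0 t1 => /(_ isT) h.
have : t * K <= t * `|K| by apply: ler_wpM2l; [exact: ltW | exact: ler_norm].
nra.
Qed.

Variables (n : nat) (f : 'cV[R]_n -> R) (gf : 'cV[R]_n -> 'cV[R]_n)
  (G : 'M[R]_n) (xk : 'cV[R]_n) (C : set 'cV[R]_n).

Definition qv y := f xk + dotv (gf xk) (y - xk) + 2^-1 * dotv (y - xk) (G *m (y - xk)).
Definition grad y := G *m (y - xk) + gf xk.

Lemma ThetaE y : C y -> Theta f gf G xk C y = (qv y)%:E.
Proof. by move=> Cy; rewrite /Theta asboolT. Qed.

Lemma ThetaN y : ~ C y -> Theta f gf G xk C y = +oo%E.
Proof. by move=> Cy; rewrite /Theta asboolF. Qed.

Lemma Theta_fin y : Theta f gf G xk C y \is a fin_num -> C y.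
Proof.
move=> h; apply: contrapT => Cy; move: h; rewrite ThetaN //.
Qed.

Hypothesis Gsym : G^T = G.

Lemma q_expand y z :
  qv z = qv y + dotv (grad y) (z - y) + 2^-1 * dotv (z - y) (G *m (z - y)).
Proof.
rewrite /qv /grad.
have -> : z - xk = (y - xk) + (z - y) by rewrite [RHS]addrC addrA subrK.
have sym a h : dotv a (G *m h) = dotv h (G *m a).
  by rewrite dotv_mx Gsym dotvC.
move: (y - xk) (z - y) => a h.
rewrite !mulmxDr !(dotvDl, dotvDr) (sym a h) (dotvC (G *m a) h) (dotvC (gf xk) h).
lra.
Qed.

Hypothesis Ccvx : cvx C.

Lemma subdiff_VI y v : subdiff (Theta f gf G xk C) y v ->
  C y /\ forall c, C c -> 0 <= dotv (grad y - v) (c - y).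
Proof.
move=> [fin H]; have Cy := Theta_fin y fin; split => // c Cc.
apply: (small_t _ (2^-1 * dotv (c - y) (G *m (c - y)))) => t /andP[t0 t1].
have Cct := Ccvx _ _ t Cy Cc (introT andP (conj (ltW t0) t1)).
have := H (y + t *: (c - y)); rewrite !ThetaE // -EFinD lee_fin.
have e : y + t *: (c - y) - y = t *: (c - y) by rewrite addrC addKr.
rewrite (q_expand y (y + t *: (c - y))) e.
move: (c - y) => w.
rewrite !dotvZr dotvZl -scalemxAr dotvZr (dotvBl (grad y) v) => h.
have : 0 <= t * (dotv (grad y) w - dotv v w +
   t * (2^-1 * dotv w (G *m w))) by lra.
by rewrite pmulr_rge0.
Qed.

Hypothesis Gpsd : forall w, 0 <= dotv w (G *m w).

Lemma VI_subdiff y v : C y -> (forall c, C c -> 0 <= dotv (grad y - v) (c - y)) ->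
  subdiff (Theta f gf G xk C) y v.
Proof.
move=> Cy H; split; first by rewrite ThetaE.
move=> z; have [Cz|Cz] := pselect (C z); last by rewrite (ThetaN z Cz) leey.
rewrite !ThetaE // -EFinD lee_fin (q_expand y z).
have := H z Cz; have := Gpsd (z - y); rewrite (dotvBl (grad y) v); lra.
Qed.

End Quad.

Lemma dist0_le {R : realType} {n} (S : set 'cV[R]_n) v : S v -> (dist0 S <= (enorm v)%:E)%E.
Proof. by move=> Sv; apply: ereal_inf_lbound; exists v. Qed.

Lemma dist0_ge {R : realType} {n} (S : set 'cV[R]_n) (r : R) :
  (forall v, S v -> r <= enorm v) -> (r%:E <= dist0 S)%E.
Proof.
by move=> H; apply: le_ereal_inf_tmp => _ [v Sv <-]; rewrite lee_fin H.
Qed.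

Section Descent.
Context {R : realType}.

Lemma line_derive {n} (f : 'cV[R]_n -> R) (gf : 'cV[R]_n -> 'cV[R]_n) (x d : 'cV[R]_n) :
  (forall x, differentiable f x /\ forall v, derive f x v = dotv (gf x) v) ->
  forall s : R, is_derive s (1 : R) (fun s : R => f (s *: d + x)) (dotv (gf (s *: d + x)) d).
Proof.
move=> Hf s.
have eqf : (fun h : R => h^-1 *: (((fun s : R => f (s *: d + x)) \o shift s) (h *: 1)
              - f (s *: d + x))) =
           (fun h : R => h^-1 *: ((f \o shift (s *: d + x)) (h *: d) - f (s *: d + x))).
  apply: funext => h /=; congr (_ *: (f _ - _)).
  by rewrite /shift /= [_%:A]mulr1 scalerDl addrA.
have [df Hd] := Hf (s *: d + x).
apply: DeriveDef.
  by rewrite /derivable eqf; apply: diff_derivable.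
by rewrite /derive eqf -/(derive f (s *: d + x) d) Hd.
Qed.

End Descent.
Section T.
Context {R : realType}.
Lemma test_poly (k1 k2 s : R) :
  is_derive s (1:R) (fun s : R => s * k1 + s ^+ 2 * k2) (k1 + 2 * s * k2).
Proof.
apply: is_derive_eq.
rewrite !scaler0 !add0r ![_%:A]mulr1 -[k2 *: _]/(k2 * _); ring.
Qed.
End T.
Section D2.
Context {R : realType}.
Lemma descent {n} (f : 'cV[R]_n -> R) (gf : 'cV[R]_n -> 'cV[R]_n) (D : set 'cV[R]_n)
  (L : R) (x d : 'cV[R]_n) :
  (forall x, differentiable f x /\ forall v, derive f x v = dotv (gf x) v) ->
  (forall s, 0 <= s <= 1 -> D (x + s *: d)) ->
  (forall y z, D y -> D z -> enorm (gf y - gf z) <= L * enorm (y - z)) ->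
  forall a, 0 < a <= 1 ->
  f (x + a *: d) <= f x + a * dotv (gf x) d + a ^+ 2 * (L / 2 * enorm d ^+ 2).
Proof.
move=> Hf HD HL a /andP[a0 a1].
set k1 := dotv (gf x) d; set k2 := L / 2 * enorm d ^+ 2.
pose F := fun s : R => f (s *: d + x).
pose P := fun s : R => s * k1 + s ^+ 2 * k2.
have dF := line_derive f gf x d Hf.
have dP := test_poly k1 k2.
have dpsi s : is_derive s (1:R) (F - P)
    (dotv (gf (s *: d + x)) d - (k1 + 2 * s * k2)).
  exact: is_deriveB.
have cont : {within `[0, a], continuous (F - P)}.
  apply: derivable_within_continuous => s _.
  by case: (dpsi s).
have [c cI Hc] := MVT a0 (fun s _ => dpsi s) cont.
have eFP s : (F - P) s = F s - P s by [].
move: Hc; rewrite !eFP /F /P !scale0r !add0r mul0r expr0n /= mul0r addr0 subr0 subr0.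
rewrite (addrC (a *: d)) => Hc.
have c0 : 0 < c by move: cI; rewrite in_itv /= => /andP[].
have c1 : c <= 1 by move: cI; rewrite in_itv /= => /andP[_ /ltW/le_trans]; apply.
have Dc : D (c *: d + x) by rewrite addrC; apply: HD; rewrite (ltW c0) c1.
have Dx : D x by have := HD 0; rewrite scale0r addr0 lexx ler01; apply.
have h1 : dotv (gf (c *: d + x)) d - k1 <= L * c * enorm d ^+ 2.
  rewrite /k1 -dotvBl; apply: le_trans (CS _ _) _.
  apply: le_trans (ler_wpM2r (enorm_ge0 _) (HL _ _ Dc Dx)) _.
  by rewrite addrK enormZ ger0_norm ?(ltW c0) // expr2 !mulrA.
have h2 : dotv (gf (c *: d + x)) d - (k1 + 2 * c * k2) <= 0.
  rewrite /k2; lra.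
have : f (x + a *: d) - (a * k1 + a ^+ 2 * k2) - f x <= 0.
  by rewrite Hc; apply: mulr_le0_ge0 => //; exact: ltW.
lra.
Qed.
End D2.

Section PiSet.
Context {R : realType}.

Lemma ex_pow (b th : R) : 0 < b < 1 -> 0 < th -> exists t : nat, b ^+ t <= th.
Proof.
move=> /andP[b0 b1] th0.
have : `|b| < 1 by rewrite ger0_norm // ltW.
move=> /cvg_expr /cvgrPdist_lt /(_ th th0) [N _ HN].
exists N; have := HN N (leqnn N); rewrite /= sub0r normrN ger0_norm; first by move/ltW.
by apply: exprn_ge0; apply: ltW.
Qed.

Lemma supp_comb {n} (x y : 'cV[R]_n) (S : {set 'I_n}) t :
  supp x \subset S -> supp y \subset S -> supp (x + t *: (y - x)) \subset S.
Proof.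
move=> /fintype.subsetP hx /fintype.subsetP hy; apply/fintype.subsetP => i; rewrite !inE !mxE.
apply: contraR => iS.
have x0 : x i 0 = 0 by apply/eqP; apply: contraR iS => h; apply: hx; rewrite inE.
have y0 : y i 0 = 0 by apply/eqP; apply: contraR iS => h; apply: hy; rewrite inE.
by rewrite x0 y0 subrr mulr0 addr0.
Qed.

Lemma coord_close {n} (x s : 'cV[R]_n) i : `|x i 0 - s i 0| <= enorm (x - s).
Proof. by have := enorm_coord (x - s) i; rewrite !mxE. Qed.

Variables (p n : nat) (B : 'M[R]_(p, n)) (l u z : 'cV[R]_n).

Lemma Pi_cvx : cvx (Pi_set B l u z).
Proof.
move=> x y t [bx [sx sBx]] [by_ [sy sBy]] /andP[t0 t1]; split; [|split].
- move=> i; have := bx i; have := by_ i; rewrite !mxE => /andP[h1 h2] /andP[h3 h4].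
  apply/andP; split; nra.
- exact: supp_comb.
- rewrite mulmxDr -scalemxAr mulmxBr; exact: supp_comb.
Qed.

Lemma Pi_self : box l u z -> Pi_set B l u z z.
Proof. by move=> bz; split => //; split; apply: subxx. Qed.

Lemma Pi_closed x : (forall e, 0 < e -> exists s, Pi_set B l u z s /\ enorm (x - s) < e) ->
  Pi_set B l u z x.
Proof.
move=> H; split; [|split].
- move=> i; apply/andP; split; rewrite leNgt; apply/negP => h.
  + have e0 : 0 < l i 0 - x i 0 by rewrite subr_gt0.
    have [s [[bs _] hs]] := H _ e0.
    have := le_lt_trans (coord_close x s i) hs; have := bs i.
    rewrite ltr_norml => /andP[h1 h2] /andP[h3 h4]; lra.
  + have e0 : 0 < x i 0 - u i 0 by rewrite subr_gt0.
    have [s [[bs _] hs]] := H _ e0.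
    have := le_lt_trans (coord_close x s i) hs; have := bs i.
    rewrite ltr_norml => /andP[h1 h2] /andP[h3 h4]; lra.
- apply/fintype.subsetP => i; rewrite inE => xi; apply: contraR xi => iz.
  rewrite -[_ == _]negbK; apply/negP => xi.
  have e0 : 0 < `|x i 0| by rewrite normr_gt0.
  have [s [[_ [/fintype.subsetP ss _]] hs]] := H _ e0.
  have s0 : s i 0 = 0.
    by apply/eqP; apply: contraR iz => h; apply: ss; rewrite inE.
  by have := le_lt_trans (coord_close x s i) hs; rewrite s0 subr0 ltxx.
- apply/fintype.subsetP => i; rewrite inE => xi; apply: contraR xi => iz.
  rewrite -[_ == _]negbK; apply/negP => xi.
  have [K [K0 HK]] := op_bound B.
  have K1 : 0 < K + 1 by rewrite ltr_wpDl.
  have e0 : 0 < `|(B *m x) i 0| / (K + 1) by rewrite divr_gt0 // normr_gt0.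
  have [s [[_ [_ /fintype.subsetP ss]] hs]] := H _ e0.
  have s0 : (B *m s) i 0 = 0.
    by apply/eqP; apply: contraR iz => h; apply: ss; rewrite inE.
  have h1 := coord_close (B *m x) (B *m s) i.
  rewrite s0 subr0 -mulmxBr in h1.
  have h2 := le_trans h1 (HK (x - s)).
  have h3 : K * enorm (x - s) <= (K + 1) * enorm (x - s).
    by rewrite ler_wpM2r ?enorm_ge0 // lerDl.
  have h4 : (K + 1) * enorm (x - s) < `|(B *m x) i 0|.
    by rewrite mulrC -ltr_pdivlMr.
  by move: (le_lt_trans (le_trans h2 h3) h4); rewrite ltxx.
Qed.

Lemma Pi_bounded : exists M, forall x, Pi_set B l u z x -> forall i, `|x i 0| <= M.
Proof.
exists (\sum_i (`|l i 0| + `|u i 0|)) => x [bx _] i.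
apply: le_trans (_ : `|l i 0| + `|u i 0| <= _).
  have := bx i => /andP[h1 h2].
  rewrite ler_norml; apply/andP; split.
    have := ler_norm (- l i 0); rewrite normrN; have := normr_ge0 (u i 0); lra.
  have := ler_norm (u i 0); have := normr_ge0 (l i 0); lra.
rewrite (bigD1 i) //= lerDl; apply: sumr_ge0 => j _; exact: addr_ge0.
Qed.

Lemma Pi_nearest : box l u z -> forall w, exists q, nearest (Pi_set B l u z) w q.
Proof.
move=> bz w.
have Hc : forall x e, 0 < e -> exists2 d, 0 < d &
    forall y, enorm (x - y) < d -> `|enorm (w - x) - enorm (w - y)| < e.
  move=> x e e0; exists e => // y hy.
  have t1 : enorm (w - x) <= enorm (w - y) + enorm (y - x).
    by apply: le_trans (enormD _ _); rewrite addrA subrK.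
  have t2 : enorm (w - y) <= enorm (w - x) + enorm (x - y).
    by apply: le_trans (enormD _ _); rewrite addrA subrK.
  rewrite (enormB y x) in t1.
  apply: le_lt_trans hy; rewrite ler_norml; apply/andP; split; lra.
have [c Cc Hmin] := exists_min _ _ _ (Pi_self bz) Pi_closed Pi_bounded Hc.
by exists c; split.
Qed.
End PiSet.

Lemma gfunE {R : realType} {p n} lam1 lam2 (B : 'M[R]_(p, n)) l u x : box l u x ->
  gfun lam1 lam2 B l u x = (lam1 * (nnz (B *m x))%:R + lam2 * (nnz x)%:R)%:E.
Proof. by move=> bx; rewrite /gfun asboolT. Qed.

Lemma gfunN {R : realType} {p n} lam1 lam2 (B : 'M[R]_(p, n)) l u x : ~ box l u x ->
  gfun lam1 lam2 B l u x = +oo%E.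
Proof. by move=> bx; rewrite /gfun asboolF. Qed.

Lemma qv_cont {R : realType} {n} f gf (G : 'M[R]_n) xk : G^T = G ->
  forall x e, 0 < e -> exists2 d, 0 < d & forall y, enorm (x - y) < d ->
    `|qv n f gf G xk x - qv n f gf G xk y| < e.
Proof.
move=> Gs x e e0.
have [K [K0 HK]] := op_bound G.
set Kg := enorm (grad n gf G xk x).
have Kg0 : 0 <= Kg := enorm_ge0 _.
have c0 : 0 < Kg + K + 1 by lra.
exists (Num.min 1 (e / (Kg + K + 1))).
  by rewrite lt_min ltr01 divr_gt0.
move=> y; rewrite lt_min => /andP[r1 r2].
have r0 : 0 <= enorm (x - y) := enorm_ge0 _.
rewrite (q_expand n f gf G xk Gs x y).
have h1 : `|dotv (grad n gf G xk x) (y - x)| <= Kg * enorm (x - y).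
  by rewrite (enormB x y); apply: CSabs.
have h2 : `|dotv (y - x) (G *m (y - x))| <= enorm (x - y) * (K * enorm (x - y)).
  rewrite (enormB x y); apply: le_trans (CSabs _ _) _.
  by apply: ler_wpM2l; [exact: enorm_ge0 | exact: HK].
have r3 : enorm (x - y) * (Kg + K + 1) < e by rewrite -ltr_pdivlMr.
have E3 (a b c : R) : a - (a + b + c) = - (b + c) by ring.
rewrite E3 normrN.
apply: le_lt_trans (ler_normD _ _) _; rewrite normrM.
have : `|2^-1 : R| = 2^-1 by rewrite ger0_norm // invr_ge0.
move=> ->.
have h4 : enorm (x - y) * (K * enorm (x - y)) <= K * enorm (x - y).
  rewrite mulrC; apply: ler_piMr; [exact: mulr_ge0 | exact: ltW].
nra.
Qed.

Theorem lemma4p1 (R : realType) (n p : nat) (B : 'M[R]_(p, n)) (lam1 lam2 : R)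
  (l u : 'cV[R]_n) (f : 'cV[R]_n -> R) (gf : 'cV[R]_n -> 'cV[R]_n)
  (Hf : 'cV[R]_n -> 'M[R]_n) (L1 : R)
  (eps mu_min mu_max tau alpha b1 b2 rho sigma varsigma beta : R)
  (xk xbar : 'cV[R]_n) (mu_k : R) (m_k : nat) (G : 'M[R]_n) :
  0 < lam1 -> 0 < lam2 ->
  (forall i, l i 0 <= 0 <= u i 0) ->
  C2_with f gf Hf ->
  0 < L1 ->
  (forall x y, box l u x -> box l u y -> enorm (gf x - gf y) <= L1 * enorm (x - y)) ->
  0 <= eps -> 0 < mu_min -> mu_min < mu_max -> 1 < tau -> 0 < alpha ->
  0 < b1 -> 1 <= b2 -> 0 < rho < 2^-1 -> 0 < sigma < 2^-1 ->
  sigma < varsigma <= 1 -> 0 < beta < 1 ->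
  (* iteration k: current iterate, PG step *)
  box l u xk ->
  mu_min <= mu_k <= mu_max ->
  pg_ok f gf lam1 lam2 B l u alpha mu_k tau xk m_k xbar ->
  (forall m, (m < m_k)%N -> forall z, ~ pg_ok f gf lam1 lam2 B l u alpha mu_k tau xk m z) ->
  let mubar := mu_k * tau ^+ m_k in
  (* no stop *)
  eps < mubar * enorm (xk - xbar) ->
  (* switch condition *)
  supp xk = supp xbar -> supp (B *m xk) = supp (B *m xbar) ->
  (* Newton step data *)
  let Pik := Pi_set B l u xk in
  let ek := b1 * enorm (mubar *: (xk - xbar)) `^ sigma in
  G_choice f gf Hf b2 xk ek G ->
  psd (G - ek%:M) ->
  (* (i) *)
  (exists ystar,
     (forall z, (Theta f gf G xk Pik ystar <= Theta f gf G xk Pik z)%E) /\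
     (forall y', (forall z, (Theta f gf G xk Pik y' <= Theta f gf G xk Pik z)%E) ->
                 y' = ystar) /\
     exists delta, 0 < delta /\
       forall y, enorm (y - ystar) < delta ->
         let z := y - mubar^-1 *: Rk gf G Pik mubar xk y in
         inexact_cond1 f gf G xk Pik z /\
         inexact_cond2 f gf G xk Pik mubar varsigma xbar z) /\
  (* (ii) *)
  (forall y, inexact_cond1 f gf G xk Pik y ->
             inexact_cond2 f gf G xk Pik mubar varsigma xbar y ->
     let d := y - xk in
     (exists t : nat, armijo f gf rho beta xk d t) /\
     forall t : nat, armijo f gf rho beta xk d t ->
       (forall t', (t' < t)%N -> ~ armijo f gf rho beta xk d t') ->
       Num.min 1 ((1 - rho) * b1 * beta / L1 * enorm (mubar *: (xk - xbar)) `^ sigma)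
         <= beta ^+ t) /\
  (* (iii) *)
  (forall y, inexact_cond2 f gf G xk Pik mubar varsigma xbar y ->
     enorm (Rk gf G Pik mubar xk y)
       <= 2^-1 * Num.min (enorm (rk gf Pik mubar xk))
                         (enorm (rk gf Pik mubar xk) `^ (1 + varsigma))).
Proof.
move=> lam1_0 lam2_0 hlu C2 L1_0 Lip eps0 mumin0 mumin_max tau1 alpha0 b1_0 b2_1
  /andP[rho0 rho2] /andP[sig0 sig2] /andP[svs vs1] /andP[beta0 beta1] bxk
  /andP[mu1 mu2] pgk pgmin mubar nostop s1 s2 Pik ek Gch psdG.
have mub0 : 0 < mubar.
  rewrite /mubar mulr_gt0 //; first exact: lt_le_trans mu1.
  by apply: exprn_gt0; apply: lt_trans tau1.
set A := enorm (mubar *: (xk - xbar)).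
have A0 : 0 < A.
  rewrite /A enormZ ger0_norm ?(ltW mub0) //; exact: le_lt_trans nostop.
have ek0 : 0 < ek by rewrite /ek mulr_gt0 // powR_gt0.
have [trG psdv] := psdG.
have Gsym : G^T = G.
  move: trG; rewrite linearB /= tr_scalar_mx => /(congr1 (fun M => M + ek%:M)).
  by rewrite !subrK.
have Gek w : ek * dotv w w <= dotv w (G *m w).
  by have := psdv w; rewrite mulmxBl mul_scalar_mx dotvBr dotvZr; lra.
have Gpsd w : 0 <= dotv w (G *m w).
  exact: le_trans (mulr_ge0 (ltW ek0) (dotv_ge0 w)) (Gek w).
have Pcvx : cvx Pik := Pi_cvx _ _ B l u xk.
have Pxk : Pik xk := Pi_self _ _ B l u xk bxk.
have Pnear := Pi_nearest _ _ B l u xk bxk.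
have [prox _] := pgk.
set zk := xk - mubar^-1 *: gf xk.
have bxbar : box l u xbar := prox_box _ _ _ _ _ _ _ _ _ prox bxk.
have Pxbar : Pik xbar.
  by split => //; rewrite s1 s2; split; apply: subxx.
have near_xbar : nearest Pik zk xbar.
  split => // c Pc; have := prox c.
  have [bc [sc sBc]] := Pc.
  rewrite /gfun (asboolT bxbar) (asboolT bc) -!EFinD lee_fin.
  have gle : lam1 * (nnz (B *m c))%:R + lam2 * (nnz c)%:R <=
             lam1 * (nnz (B *m xbar))%:R + lam2 * (nnz xbar)%:R.
    apply: lerD; apply: ler_wpM2l; try exact: ltW; rewrite ler_nat /nnz;
      apply: subset_leq_card; by rewrite -?s1 -?s2.
  have cf : 0 < (2 * (mu_k * tau ^+ m_k)^-1)^-1.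
    by rewrite invr_gt0 mulr_gt0 // invr_gt0.
  move=> h.
  have h2 : enorm (xbar - zk) ^+ 2 <= enorm (c - zk) ^+ 2.
    rewrite -(ler_pM2l cf); rewrite /zk /mubar; lra.
  by rewrite (enormB zk xbar) (enormB zk c); apply: sq_le_le; rewrite ?enorm_ge0.
have proj_xbar : Defs.proj Pik zk = xbar.
  exact: (VI_proj _ _ _ Pxbar (nearest_VI _ _ _ Pcvx near_xbar)).
have rkE : rk gf Pik mubar xk = mubar *: (xk - xbar).
  by rewrite /rk -/zk proj_xbar.
have part3 : forall y, inexact_cond2 f gf G xk Pik mubar varsigma xbar y ->
     enorm (Rk gf G Pik mubar xk y) <= 2^-1 * Num.min (enorm (rk gf Pik mubar xk))
                         (enorm (rk gf Pik mubar xk) `^ (1 + varsigma)).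
  move=> y c2.
  have key : forall v, subdiff (Theta f gf G xk Pik) y v ->
      enorm (Rk gf G Pik mubar xk y) <= enorm v.
    move=> v hv.
    have [Py VIy] := subdiff_VI n f gf G xk Pik Gsym Pcvx y v hv.
    set w1 := y - mubar^-1 *: (G *m (y - xk) + gf xk).
    have [Pp1 VIp1] := proj_spec Pik w1 Pcvx (Pnear w1).
    set w2 := y + mubar^-1 *: (v - grad n gf G xk y).
    have VI2 : forall c, Pik c -> dotv (w2 - y) (c - y) <= 0.
      move=> c Pc; rewrite /w2 addrC addKr dotvZl -opprB dotvNl.
      have := VIy c Pc; have : 0 < mubar^-1 by rewrite invr_gt0.
      nra.
    have ne := VI_nonexp Pik w1 w2 _ _ Pp1 Py VIp1 VI2.
    have e : w1 - w2 = - (mubar^-1 *: v).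
      rewrite /w1 /w2 /grad; move: (G *m (y - xk)) => M.
      by apply/matrixP => i j; rewrite !mxE; ring.
    rewrite e enormN enormZ ger0_norm ?invr_ge0 ?(ltW mub0) // in ne.
    rewrite /Rk -/w1 enormZ ger0_norm ?(ltW mub0) // (enormB y).
    have := ler_wpM2l (ltW mub0) ne; rewrite mulrA mulfV ?gt_eqF // mul1r.
    done.
  have lb := dist0_ge _ _ key.
  have := le_trans lb c2; rewrite lee_fin => h.
  apply: le_trans h _; rewrite rkE -/A.
  have m0 : 0 <= Num.min A (A `^ (1 + varsigma)).
    by rewrite le_min (ltW A0) powR_ge0.
  have m1 : Num.min mubar^-1 1 <= 1 by rewrite ge_min lexx orbT.
  have m2 : 0 <= Num.min mubar^-1 1 by rewrite le_min invr_ge0 (ltW mub0) ler01.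
  nra.
have qxk : qv n f gf G xk xk = f xk.
  by rewrite /qv subrr dotv0r mulmx0 dotv0r mulr0 !addr0.
have part2 : forall y, inexact_cond1 f gf G xk Pik y ->
     inexact_cond2 f gf G xk Pik mubar varsigma xbar y ->
     (exists t : nat, armijo f gf rho beta xk (y - xk) t) /\
     forall t : nat, armijo f gf rho beta xk (y - xk) t ->
       (forall t', (t' < t)%N -> ~ armijo f gf rho beta xk (y - xk) t') ->
       Num.min 1 ((1 - rho) * b1 * beta / L1 * enorm (mubar *: (xk - xbar)) `^ sigma)
         <= beta ^+ t.
  move=> y c1 _; set d := y - xk.
  have Py : Pik y.
    apply: contrapT => nP; move: c1.
    rewrite /inexact_cond1 (ThetaE n f gf G xk Pik xk Pxk) (ThetaN n f gf G xk Pik y nP).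
    by rewrite leye_eq.
  move: c1; rewrite /inexact_cond1 (ThetaE n f gf G xk Pik xk Pxk)
    (ThetaE n f gf G xk Pik y Py) lee_fin qxk /qv -/d => c1.
  have k1le : dotv (gf xk) d <= - (ek / 2) * enorm d ^+ 2.
    by have := Gek d; rewrite enorm_sq; lra.
  have HD : forall s, 0 <= s <= 1 -> box l u (xk + s *: d).
    by move=> s hs; have [] := Pcvx _ _ s Pxk Py hs.
  have N0 := enorm_ge0 d.
  have suff_arm : forall a, 0 < a <= 1 -> a <= (1 - rho) * ek / L1 ->
      f (xk + a *: d) <= f xk + rho * a * dotv (gf xk) d.
    move=> a /andP[a0 a1] aL.
    have := descent f gf (box l u) L1 xk d C2.1 HD Lip a.
    rewrite a0 a1 => /(_ isT) hd.
    have aL1 : a * L1 <= (1 - rho) * ek by rewrite -ler_pdivlMr.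
    have h1 : (1 - rho) * a * dotv (gf xk) d <= (1 - rho) * a * (- (ek / 2) * enorm d ^+ 2).
      by apply: ler_wpM2l => //; apply: mulr_ge0; lra.
    have h2 : a / 2 * enorm d ^+ 2 * (a * L1) <= a / 2 * enorm d ^+ 2 * ((1 - rho) * ek).
      apply: ler_wpM2l => //; apply: mulr_ge0; [apply: divr_ge0; lra | exact: sqr_ge0].
    nra.
  split.
    have th0 : 0 < (1 - rho) * ek / L1 by rewrite divr_gt0 // mulr_gt0 // subr_gt0; lra.
    have [t ht] := ex_pow beta ((1 - rho) * ek / L1) (introT andP (conj beta0 beta1)) th0.
    exists t; rewrite /armijo; apply: suff_arm => //.
    by rewrite exprn_gt0 // exprn_ile1 // ltW.
  move=> [|t] _ tmin; first by rewrite expr0 ge_min lexx.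
  have nb : (1 - rho) * ek / L1 < beta ^+ t.
    rewrite ltNge; apply/negP => hle; apply: (tmin t (ltnSn t)).
    by rewrite /armijo; apply: suff_arm => //; rewrite exprn_gt0 // exprn_ile1 // ltW.
  rewrite ge_min; apply/orP; right; rewrite exprS.
  have -> : (1 - rho) * b1 * beta / L1 * A `^ sigma = beta * ((1 - rho) * ek / L1).
    by rewrite /ek; ring.
  by apply: ler_wpM2l; [exact: ltW | exact: ltW].
split; last split; [| exact: part2 | exact: part3].
have [ys Pys ysmin] := exists_min Pik (qv n f gf G xk) xk Pxk
  (Pi_closed _ _ B l u xk) (Pi_bounded _ _ B l u xk) (qv_cont f gf G xk Gsym).
have ThE y : Pik y -> Theta f gf G xk Pik y = (qv n f gf G xk y)%:E.
  exact: ThetaE.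
have ThN y : ~ Pik y -> Theta f gf G xk Pik y = +oo%E.
  exact: ThetaN.
have Thmin : forall z, (Theta f gf G xk Pik ys <= Theta f gf G xk Pik z)%E.
  move=> z; have [Pz|Pz] := pselect (Pik z).
    by rewrite !ThE // lee_fin; apply: ysmin.
  by rewrite (ThN z Pz) leey.
have sub0 : subdiff (Theta f gf G xk Pik) ys 0.
  split; first by rewrite ThE.
  by move=> z; rewrite dotv0l adde0; apply: Thmin.
have [_ VIys] := subdiff_VI n f gf G xk Pik Gsym Pcvx ys 0 sub0.
have uniq : forall y', (forall z, (Theta f gf G xk Pik y' <= Theta f gf G xk Pik z)%E) ->
    y' = ys.
  move=> y' H.
  have Py' : Pik y'.
    apply: contrapT => nP; have := H xk.
    by rewrite (ThN y' nP) (ThE xk Pxk) leye_eq.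
  have := H ys; rewrite !ThE // lee_fin => q1.
  have q2 := q_expand n f gf G xk Gsym ys y'.
  have v1 := VIys y' Py'; rewrite subr0 in v1.
  have g1 := Gek (y' - ys).
  have dd : dotv (y' - ys) (y' - ys) <= 0.
    have : ek * dotv (y' - ys) (y' - ys) <= 0 by lra.
    by rewrite pmulr_rle0.
  have : dotv (y' - ys) (y' - ys) = 0 by apply/eqP; rewrite eq_le dd dotv_ge0.
  by move=> /dotv_eq0 /eqP; rewrite subr_eq0 => /eqP.
have gradxk : grad n gf G xk xk = gf xk by rewrite /grad subrr mulmx0 add0r.
have gap : qv n f gf G xk ys < qv n f gf G xk xk.
  rewrite ltNge; apply/negP => hle.
  have xkmin : forall z, (Theta f gf G xk Pik xk <= Theta f gf G xk Pik z)%E.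
    move=> z; have [Pz|Pz] := pselect (Pik z).
      by rewrite !ThE // lee_fin; apply: le_trans hle (ysmin _ Pz).
    by rewrite (ThN z Pz) leey.
  have exk := uniq xk xkmin.
  have pxk : Defs.proj Pik zk = xk.
    apply: VI_proj => // c Pc.
    have := VIys c Pc; rewrite -exk subr0 gradxk /zk.
    rewrite (_ : xk - mubar^-1 *: gf xk - xk = - (mubar^-1 *: gf xk)); last first.
      by rewrite addrC addKr.
    rewrite dotvNl dotvZl; have : 0 < mubar^-1 by rewrite invr_gt0.
    nra.
  move: A0; rewrite /A -proj_xbar pxk subrr scaler0 enorm0 ltxx.
  by [].
exists ys; split; first exact: Thmin.
split; first exact: uniq.
have [K [K0 HK]] := op_bound G.
set Kg := enorm (grad n gf G xk ys).
have Kg0 : 0 <= Kg := enorm_ge0 _.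
set L0 := 1 + mubar^-1 * K.
have L00 : 0 <= L0 by rewrite addr_ge0 // mulr_ge0 // invr_ge0 ltW.
set c2 := Num.min mubar^-1 1 / 2 * Num.min A (A `^ (1 + varsigma)).
have c20 : 0 < c2.
  rewrite /c2 mulr_gt0 // ?divr_gt0 // ?lt_min ?invr_gt0 ?mub0 ?ltr01 ?A0 ?powR_gt0 //.
set gp := qv n f gf G xk xk - qv n f gf G xk ys.
have gp0 : 0 < gp by rewrite /gp subr_gt0.
set rho' := Num.min 1 (gp / (Kg + K + 1)).
have rho0' : 0 < rho' by rewrite lt_min ltr01 divr_gt0 //; lra.
set M := (1 + L0) * (mubar + K + 1).
have M0 : 0 < M by rewrite mulr_gt0 //; lra.
exists (Num.min rho' c2 / M); split.
  by rewrite divr_gt0 // lt_min rho0' c20.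
move=> y hy z.
set D := enorm (y - ys).
have D0 : 0 <= D := enorm_ge0 _.
have DM : D * M < Num.min rho' c2 by rewrite -ltr_pdivlMr.
move: DM; rewrite lt_min => /andP[DMr DMc].
set w := fun y => y - mubar^-1 *: (G *m (y - xk) + gf xk).
set pp := Defs.proj Pik (w y).
have zE : z = pp.
  rewrite /z /Rk -/(w y) -/pp scalerA mulVf ?gt_eqF // scale1r.
  by rewrite opprB addrC subrK.
have [Pp VIp] := proj_spec Pik (w y) Pcvx (Pnear _).
have VIys' : forall c, Pik c -> dotv (w ys - ys) (c - ys) <= 0.
  move=> c Pc; have := VIys c Pc; rewrite subr0 /w.
  rewrite (_ : ys - mubar^-1 *: (G *m (ys - xk) + gf xk) - ys =
     - (mubar^-1 *: grad n gf G xk ys)); last by rewrite addrC addKr.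
  rewrite dotvNl dotvZl; have : 0 < mubar^-1 by rewrite invr_gt0.
  nra.
have dz : enorm (pp - ys) <= enorm (w y - w ys).
  exact: (VI_nonexp Pik (w y) (w ys) pp ys Pp Pys VIp VIys').
have ww : w y - w ys = (y - ys) - mubar^-1 *: (G *m (y - ys)).
  have hG : G *m (y - ys) = G *m (y - xk) - G *m (ys - xk).
    by rewrite -mulmxBr opprB addrA subrK.
  rewrite /w hG; move: (G *m (y - xk)) (G *m (ys - xk)) => M1 M2.
  by apply/matrixP => i j; rewrite !mxE; ring.
have wwb : enorm (w y - w ys) <= L0 * D.
  rewrite ww; apply: le_trans (enormD _ _) _; rewrite enormN enormZ.
  rewrite ger0_norm ?invr_ge0 ?(ltW mub0) //.
  have := HK (y - ys); rewrite -/D => hk.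
  have : mubar^-1 * enorm (G *m (y - ys)) <= mubar^-1 * (K * D).
    by apply: ler_wpM2l => //; rewrite invr_ge0 ltW.
  rewrite /L0; lra.
set r := enorm (pp - ys).
have r0 : 0 <= r := enorm_ge0 _.
have L0M : L0 <= M.
  rewrite /M; have : 0 <= (1 + L0) * (mubar + K) by rewrite mulr_ge0 //; lra.
  lra.
have rD : r <= L0 * D := le_trans dz wwb.
have rM : r <= D * M.
  by apply: le_trans rD _; rewrite mulrC; apply: ler_wpM2l.
have rrho : r < rho' := le_lt_trans rM DMr.
move: rrho; rewrite lt_min => /andP[r1 r2].
split.
  rewrite /inexact_cond1 zE !ThE // lee_fin.
  rewrite (q_expand n f gf G xk Gsym ys pp).
  have h1 : dotv (grad n gf G xk ys) (pp - ys) <= Kg * r by apply: CS.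
  have h2 : dotv (pp - ys) (G *m (pp - ys)) <= r * (K * r).
    apply: le_trans (CS _ _) _.
    by apply: ler_wpM2l; [exact: enorm_ge0 | exact: HK].
  have h4 : r * (K * r) <= K * r.
    rewrite mulrC; apply: ler_piMr; [exact: mulr_ge0 | exact: ltW].
  have r3 : r * (Kg + K + 1) < gp by rewrite -ltr_pdivlMr //; lra.
  rewrite /gp in r3; nra.
rewrite /inexact_cond2 zE.
set v := mubar *: (y - pp) - G *m (y - pp).
have hsub : subdiff (Theta f gf G xk Pik) pp v.
  apply: (VI_subdiff n f gf G xk Pik Gsym Gpsd pp v Pp) => c Pc.
  have e : grad n gf G xk pp - v = - (mubar *: (w y - pp)).
    have hG2 : G *m (y - xk) = G *m (pp - xk) + G *m (y - pp).
      by rewrite -mulmxDr [pp - xk + _]addrC addrA subrK.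
    rewrite /v /w /grad hG2; move: (G *m (pp - xk)) (G *m (y - pp)) => M1 M2.
    apply/matrixP => i j; rewrite !mxE; field.
    by rewrite gt_eqF.
  rewrite e dotvNl dotvZl; have := VIp c Pc.
  nra.
apply: le_trans (dist0_le _ _ hsub) _; rewrite lee_fin.
have ypb : enorm (y - pp) <= (1 + L0) * D.
  have : y - pp = (y - ys) + (ys - pp) by rewrite addrA subrK.
  move=> ->; apply: le_trans (enormD _ _) _; rewrite (enormB ys pp) -/D -/r; lra.
have vb : enorm v <= (mubar + K) * enorm (y - pp).
  rewrite /v; apply: le_trans (enormD _ _) _; rewrite enormN enormZ ger0_norm ?(ltW mub0) //.
  have := HK (y - pp); lra.
have : (mubar + K) * enorm (y - pp) <= (mubar + K) * ((1 + L0) * D).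
  by apply: ler_wpM2l => //; lra.
have : (mubar + K) * ((1 + L0) * D) <= D * M.
  rewrite /M; have : 0 <= D * (1 + L0) by rewrite mulr_ge0 //; lra.
  nra.
rewrite -/c2; lra.
Qed.
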